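(* Let $\mathbb{Q}^*_+$ act on the ring $\mathcal{A}_f$ of finite adeles by multiplication via the diagonal embedding. For each $a=(a_p)_{p\in\mathcal{P}}\in\mathcal{A}_f$, the closure of the orbit $\mathbb{Q}^*_+a$ is $$\overline{\mathbb{Q}^*_+ a}=\{b\in\mathcal{A}_f : \text{for every } p\in\mathcal{P},\ a_p=0 \implies b_p=0\}.$$
   Context: $\mathcal{P}$ denotes the set of prime numbers; $\mathbb{Q}_p$, $\mathbb{Z}_p$ are the $p$-adic numbers and $p$-adic integers. $\mathcal{A}_f=\{(a_p)\in\prod_{p}\mathbb{Q}_p : a_p\in\mathbb{Z}_p \text{ for all but finitely many } p\}$ with componentwise operations and the restricted product topology, in which the sets $\prod_{p\in F}V_p\times\prod_{p\notin F}\mathbb{Z}_p$ ($F$ finite, $V_p$ a neighbourhood of $0$ in $\mathbb{Q}_p$) form a neighbourhood base at $0$. $\mathbb{Q}$ embeds diagonally in $\mathcal{A}_f$. *)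

(* Defs.v *)
(* Finite adeles built concretely:
   Q_p = p-adic Cauchy sequences of rationals (a setoid);
   A_f = families indexed by primes, almost all components in Z_p;
   topology on A_f given by the restricted-product neighbourhood base. *)
From mathcomp Require Import all_boot all_order all_algebra.
Set Implicit Arguments. Unset Strict Implicit. Unset Printing Implicit Defensive.
Import Order.TTheory GRing.Theory Num.Theory.
Local Open Scope ring_scope.

Definition vp (p : nat) (x : rat) : int :=
  (logn p (absz (numq x)))%:Z - (logn p (absz (denq x)))%:Z.

(* x ∈ p^N Z_(p)  (x = 0 or v_p(x) >= N) *)
Definition pdiv_by (p : nat) (N : int) (x : rat) : bool :=
  (x == 0) || (N <= vp p x).

Definition padic_cauchy (p : nat) (u : nat -> rat) : Prop :=
  forall N : int, exists M : nat, forall m n : nat, (M <= m)%N -> (M <= n)%N ->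
    pdiv_by p N (u m - u n).

(* the p-adic number represented by u lies in p^N Z_p *)
Definition Qp_in_ball (p : nat) (N : int) (u : nat -> rat) : Prop :=
  exists M : nat, forall n : nat, (M <= n)%N -> pdiv_by p N (u n).

Definition Qp_eq (p : nat) (u v : nat -> rat) : Prop :=
  forall N : int, Qp_in_ball p N (fun n => u n - v n).

Definition Qp_zero : nat -> rat := fun _ => 0.

(* A raw adele: for each prime p, a representative a p of a_p ∈ Q_p *)
Definition raw_adele := nat -> nat -> rat.

Definition is_finite_adele (a : raw_adele) : Prop :=
  (forall p, prime p -> padic_cauchy p (a p)) /\
  exists B : nat, forall p, prime p -> (B < p)%N -> Qp_in_ball p 0 (a p).

Definition adele_eq (a b : raw_adele) : Prop :=
  forall p, prime p -> Qp_eq p (a p) (b p).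

Definition adele_scale (q : rat) (a : raw_adele) : raw_adele :=
  fun p n => q * a p n.

Definition pos_orbit (a : raw_adele) : raw_adele -> Prop :=
  fun s => exists q : rat, 0 < q /\ adele_eq s (adele_scale q a).

(* s - b lies in the basic neighbourhood  prod_{p in F} p^(N p) Z_p x prod_{p notin F} Z_p
   (the balls p^k Z_p form a neighbourhood base of 0 in Q_p) *)
Definition in_basic_nbhd (F : seq nat) (N : nat -> int) (b s : raw_adele) : Prop :=
  forall p, prime p ->
    Qp_in_ball p (if p \in F then N p else 0) (fun n => s p n - b p n).

Definition adele_closure (S : raw_adele -> Prop) (b : raw_adele) : Prop :=
  forall (F : seq nat) (N : nat -> int), exists s, S s /\ in_basic_nbhd F N b s.

(* Main.v *)
Require Import Defs.
From mathcomp Require Import all_boot all_order all_algebra.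
Import Order.TTheory GRing.Theory Num.Theory.
Local Open Scope ring_scope.
Set Implicit Arguments. Unset Strict Implicit.

Lemma vp_frac p (m d : int) : m != 0 -> d != 0 ->
  vp p (m%:~R / d%:~R) = (logn p `|m|)%:Z - (logn p `|d|)%:Z.
Proof.
move=> m0 d0; set x : rat := _ / _.
have x0 : x != 0 by rewrite /x mulf_neq0 ?invr_eq0 ?intr_eq0.
have e : numq x * d = m * denq x.
  apply: (@intr_inj rat); rewrite !intrM numqE /x.
  by rewrite mulrAC divfK ?intr_eq0.
have e2 : (`|numq x| * `|d| = `|m| * `|denq x|)%N by rewrite -!abszM e.
have n0 : (0 < `|numq x|)%N by rewrite absz_gt0 numq_eq0.
have dd0 : (0 < `|denq x|)%N by rewrite absz_gt0 denq_neq0.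
have := congr1 (logn p) e2.
rewrite !lognM ?absz_gt0 ?numq_eq0 // => e3.
rewrite /vp; apply/eqP; rewrite subr_eq addrAC eq_sym subr_eq -!PoszD e3 addnC //.
Qed.
From mathcomp Require Import zify ring.

Lemma vp_int p (z : int) : vp p z%:~R = (logn p `|z|)%:Z.
Proof. by rewrite /vp numq_int denq_int /= logn1 subr0. Qed.

Lemma logn_addz (p : nat) (a b : int) : prime p -> a + b != 0 ->
  (minn (logn p `|a|%N) (logn p `|b|%N) <= logn p `|(a + b)%R|%N)%N.
Proof.
move=> pp s0; set k := minn _ _.
have hd (c : int) : (k <= logn p `|c|)%N -> c \in dvdz (Posz (p ^ k)).
  case: (c =P 0) => [-> _|/eqP c0 hk]; first exact: rpred0.
  by rewrite -topredE /= /dvdz /= pfactor_dvdn // absz_gt0.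
have := rpredD (hd a (geq_minl _ _)) (hd b (geq_minr _ _)).
by rewrite -topredE /= /dvdz /= pfactor_dvdn ?absz_gt0.
Qed.

Lemma pdiv_add p N x y : prime p -> pdiv_by p N x -> pdiv_by p N y ->
  pdiv_by p N (x + y).
Proof.
move=> pp; rewrite /pdiv_by.
case: (x =P 0) => [->|/eqP x0]; first by rewrite add0r.
case: (y =P 0) => [->|/eqP y0]; first by move=> h _; rewrite addr0 (negbTE x0).
case: (x + y =P 0) => [->|/eqP s0] //= hx hy.
rewrite -[x]divq_num_den -[y]divq_num_den in hx hy s0 *.
set n1 := numq x in hx hy s0 *; set d1 := denq x in hx hy s0 *.
set n2 := numq y in hx hy s0 *; set d2 := denq y in hx hy s0 *.
have n10 : n1 != 0 by rewrite numq_eq0.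
have n20 : n2 != 0 by rewrite numq_eq0.
have d10 : d1 != 0 by rewrite denq_neq0.
have d20 : d2 != 0 by rewrite denq_neq0.
have e : n1%:~R / d1%:~R + n2%:~R / d2%:~R = (n1 * d2 + n2 * d1)%:~R / (d1 * d2)%:~R :> rat.
  rewrite !intrM intrD !intrM; field; by rewrite !intr_eq0 d10 d20.
rewrite e in s0 *.
have sn0 : n1 * d2 + n2 * d1 != 0.
  by apply: contra s0 => /eqP ->; rewrite mul0r.
rewrite !vp_frac ?mulf_neq0 // in hx hy *.
have := @logn_addz p _ _ pp sn0.
rewrite !abszM !lognM ?absz_gt0 //.
move: hx hy; clear e s0; clearbody n1 n2 d1 d2.
move: (logn p `|n1|) (logn p `|n2|) (logn p `|d1|) (logn p `|d2|) (logn p `|(n1 * d2 + n2 * d1)%R|) => A B C D S.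
lia.
Qed.

Lemma vp0 p : vp p 0 = 0.
Proof. by rewrite /vp /= logn0 logn1. Qed.

Lemma vpN p x : vp p (- x) = vp p x.
Proof. by rewrite /vp numqN denqN abszN. Qed.

Lemma pdivN p N x : pdiv_by p N (- x) = pdiv_by p N x.
Proof. by rewrite /pdiv_by vpN oppr_eq0. Qed.

Lemma pdiv0 p N : pdiv_by p N 0.
Proof. by rewrite /pdiv_by eqxx. Qed.

Lemma pdiv_sub p N x y : prime p -> pdiv_by p N x -> pdiv_by p N y ->
  pdiv_by p N (x - y).
Proof. by move=> pp hx hy; apply: pdiv_add => //; rewrite pdivN. Qed.

Lemma pdiv_le p N N' x : N' <= N -> pdiv_by p N x -> pdiv_by p N' x.
Proof. by move=> le /orP [h|h]; apply/orP; [left|right] => //; apply: le_trans h. Qed.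

Lemma vpM p x y : x != 0 -> y != 0 -> vp p (x * y) = vp p x + vp p y.
Proof.
move=> x0 y0.
have n10 : numq x != 0 by rewrite numq_eq0.
have n20 : numq y != 0 by rewrite numq_eq0.
have d10 : denq x != 0 by rewrite denq_neq0.
have d20 : denq y != 0 by rewrite denq_neq0.
have e : x * y = (numq x * numq y)%:~R / (denq x * denq y)%:~R.
  rewrite -{1}[x]divq_num_den -{1}[y]divq_num_den !intrM; field.
  by rewrite !intr_eq0 d10 d20.
rewrite e vp_frac ?mulf_neq0 // /vp !abszM !lognM ?absz_gt0 ?numq_eq0 //.
by rewrite !PoszD; ring.
Qed.

Lemma vpV p x : vp p x^-1 = - vp p x.
Proof.
case: (x =P 0) => [->|/eqP x0]; first by rewrite invr0 vp0 oppr0.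
have := @vpM p x x^-1 x0 (invr_neq0 x0); rewrite mulfV //.
have -> : vp p 1 = 0 by have := vp_int p 1; rewrite /= logn1.
by move/eqP; rewrite eq_sym addr_eq0 => /eqP ->; rewrite opprK.
Qed.

Lemma pdiv_mul p N M x y : pdiv_by p N x -> pdiv_by p M y ->
  pdiv_by p (N + M) (x * y).
Proof.
rewrite /pdiv_by; case: (x =P 0) => [->|/eqP x0]; first by rewrite mul0r eqxx.
case: (y =P 0) => [->|/eqP y0]; first by rewrite mulr0 eqxx.
rewrite /= mulf_eq0 (negbTE x0) (negbTE y0) /= vpM // => h1 h2.
exact: lerD.
Qed.

Lemma pdiv_vp p x : pdiv_by p (vp p x) x.
Proof. by rewrite /pdiv_by lexx orbT. Qed.

Lemma pdiv_strict p N x y : prime p -> x != 0 -> vp p x < N -> pdiv_by p N y ->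
  x + y != 0 /\ vp p (x + y) = vp p x.
Proof.
move=> pp x0 lt hy.
have hy' : pdiv_by p (vp p x) y by apply: pdiv_le hy; apply: ltW.
have hs := pdiv_add pp (pdiv_vp p x) hy'.
have nh : ~~ pdiv_by p (vp p x + 1) x by rewrite /pdiv_by (negbTE x0) /=; lia.
have hy1 : pdiv_by p (vp p x + 1) y by apply: pdiv_le hy; lia.
case: (x + y =P 0) => [e|/eqP s0].
  suff : pdiv_by p (vp p x + 1) ((x + y) - y) by rewrite addrK (negbTE nh).
  by rewrite e sub0r pdivN.
split => //.
move: hs; rewrite /pdiv_by ?(negbTE s0) /= => le1.
apply/eqP; rewrite eq_le le1 andbT.
rewrite leNgt; apply/negP => lt2.
suff : pdiv_by p (vp p x + 1) ((x + y) - y) by rewrite addrK (negbTE nh).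
apply: pdiv_sub => //; rewrite /pdiv_by ?(negbTE s0) /=.
lia.
Qed.

Lemma ball_ext p N u v : (forall n, u n = v n) -> Qp_in_ball p N u -> Qp_in_ball p N v.
Proof. by move=> e [M h]; exists M => n /h; rewrite e. Qed.

Lemma ball_add p N u v : prime p -> Qp_in_ball p N u -> Qp_in_ball p N v ->
  Qp_in_ball p N (fun n => u n + v n).
Proof.
move=> pp [M1 h1] [M2 h2]; exists (maxn M1 M2) => n.
by rewrite geq_max => /andP [/h1 ? /h2 ?]; apply: pdiv_add.
Qed.

Lemma ball_sub p N u v : prime p -> Qp_in_ball p N u -> Qp_in_ball p N v ->
  Qp_in_ball p N (fun n => u n - v n).
Proof.
move=> pp [M1 h1] [M2 h2]; exists (maxn M1 M2) => n.
by rewrite geq_max => /andP [/h1 ? /h2 ?]; apply: pdiv_sub.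
Qed.

Lemma ball_le p N N' u : N' <= N -> Qp_in_ball p N u -> Qp_in_ball p N' u.
Proof. by move=> le [M h]; exists M => n /h; apply: pdiv_le. Qed.

Lemma ball_mulc p M N c u : pdiv_by p M c -> Qp_in_ball p N u ->
  Qp_in_ball p (M + N) (fun n => c * u n).
Proof. by move=> hc [K h]; exists K => n /h; apply: pdiv_mul. Qed.

Lemma ball_const p N c : pdiv_by p N c -> Qp_in_ball p N (fun _ => c).
Proof. by move=> h; exists 0%N. Qed.

Lemma forward (a b : raw_adele) :
  adele_closure (pos_orbit a) b ->
  forall p : nat, prime p -> Qp_eq p (a p) Qp_zero -> Qp_eq p (b p) Qp_zero.
Proof.
move=> H p pp Ha N.
have [s [[q [q0 hs]] hn]] := H [:: p] (fun _ => N).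
have hb := hn p pp; rewrite mem_seq1 eqxx in hb.
have h1 := hs p pp N.
have h2 : Qp_in_ball p N (fun n => q * (a p n - Qp_zero n)).
  have := ball_mulc (pdiv_vp p q) (Ha (N - vp p q)).
  by apply: ball_le; rewrite addrC subrK.
have := ball_sub pp (ball_add pp h2 h1) hb.
apply: ball_ext => n; rewrite /Qp_zero /adele_scale; ring.
Qed.

From Stdlib Require Import Classical ClassicalEpsilon.

Lemma stable_val p (u : nat -> rat) : prime p -> padic_cauchy p u ->
  ~ Qp_eq p u Qp_zero ->
  exists k M, forall n, (M <= n)%N -> u n != 0 /\ vp p (u n) = k.
Proof.
move=> pp hc hn.
have [N hN] : exists N, ~ Qp_in_ball p N (fun n => u n - Qp_zero n).
  by apply: not_all_ex_not.
have [M hM] := hc N.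
have [n0 hn0] : exists n0, ~ ((M <= n0)%N -> pdiv_by p N (u n0 - Qp_zero n0)).
  by apply: not_all_ex_not => h; apply: hN; exists M.
have [Mn0 nd] : (M <= n0)%N /\ ~ pdiv_by p N (u n0).
  split; first by apply: NNPP => h; apply: hn0 => /h.
  by move=> h; apply: hn0 => _; rewrite /Qp_zero subr0.
have u0 : u n0 != 0 by apply/negP => /eqP e; apply: nd; rewrite e pdiv0.
have lt : vp p (u n0) < N.
  by rewrite ltNge; apply/negP => h; apply: nd; rewrite /pdiv_by h orbT.
exists (vp p (u n0)), M => n Mn.
have := pdiv_strict pp u0 lt (hM n n0 Mn Mn0).
by rewrite addrC subrK.
Qed.

Lemma cauchy_bounded p (u : nat -> rat) : prime p -> padic_cauchy p u ->
  exists J, Qp_in_ball p J u.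
Proof.
move=> pp hc; have [M hM] := hc 0.
exists (Num.min 0 (vp p (u M))), M => n Mn.
have -> : u n = (u n - u M) + u M by rewrite subrK.
apply: pdiv_add => //.
  by apply: pdiv_le (hM n M Mn (leqnn M)); rewrite ge_min lexx.
by apply: pdiv_le (pdiv_vp p (u M)); rewrite ge_min lexx orbT.
Qed.

Lemma local_approx p (a b : nat -> rat) (K : int) : prime p ->
  padic_cauchy p a -> padic_cauchy p b ->
  (Qp_eq p a Qp_zero -> Qp_eq p b Qp_zero) ->
  exists c : rat, exists T : nat, forall q : rat, pdiv_by p T%:Z (q - c) ->
    Qp_in_ball p K (fun n => q * a n - b n).
Proof.
move=> pp ca cb hab.
case: (classic (Qp_eq p a Qp_zero)) => [ha|ha].
  exists 0, 0%N => q _.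
  have hb := hab ha K.
  have h1 := ball_mulc (pdiv_vp p q) (ha (K - vp p q)).
  rewrite addrC subrK in h1.
  have := ball_sub pp h1 hb.
  by apply: ball_ext => n; rewrite /Qp_zero; ring.
have [k [M0 hM0]] := stable_val pp ca ha.
have [J [M1 hM1]] := cauchy_bounded pp cb.
set V := Num.min (K - k) (J - k).
have [Ma hMa] := ca (K - V).
have [Mb hMb] := cb K.
set n0 := (M0 + M1 + Ma + Mb)%N.
have [a0 vpa] := hM0 n0 (ltac:(rewrite /n0; lia)).
exists (b n0 / a n0), `|K - k|%N => q hq.
have hq' : pdiv_by p (K - k) (q - b n0 / a n0) by apply: pdiv_le hq; lia.
have hc : pdiv_by p (J - k) (b n0 / a n0).
  have := pdiv_mul (hM1 n0 (ltac:(rewrite /n0; lia))) (pdiv_vp p (a n0)^-1).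
  by rewrite vpV vpa.
have hqV : pdiv_by p V q.
  have -> : q = (q - b n0 / a n0) + b n0 / a n0 by rewrite subrK.
  apply: pdiv_add => //; apply: pdiv_le; try eassumption; by rewrite /V ge_min lexx ?orbT.
have t1 : Qp_in_ball p K (fun n => q * (a n - a n0)).
  have := ball_mulc hqV (ex_intro _ Ma (fun n h => hMa n n0 h (ltac:(rewrite /n0; lia))) : Qp_in_ball p (K - V) (fun n => a n - a n0)).
  by rewrite addrC subrK.
have t2 : Qp_in_ball p K (fun _ => a n0 * (q - b n0 / a n0)).
  apply: ball_const; have := pdiv_mul (pdiv_vp p (a n0)) hq'.
  by rewrite vpa addrC subrK.
have t3 : Qp_in_ball p K (fun n => b n - b n0).
  by exists Mb => n h; apply: hMb => //; rewrite /n0; lia.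
have := ball_sub pp (ball_add pp t1 t2) t3.
apply: ball_ext => n; field; exact: a0.
Qed.

Lemma dvd_prod_mem (r : seq nat) (P : pred nat) (F : nat -> nat) i :
  i \in r -> P i -> (F i %| \prod_(j <- r | P j) F j)%N.
Proof.
elim: r => // x r IH; rewrite inE big_cons => /orP [/eqP <-|ir] Pi.
  by rewrite Pi dvdn_mulr.
by case: (P x); rewrite ?dvdn_mull // IH.
Qed.

Lemma coprime_prod n (r : seq nat) (P : pred nat) (F : nat -> nat) :
  (forall i, i \in r -> P i -> coprime n (F i)) ->
  coprime n (\prod_(j <- r | P j) F j).
Proof.
elim: r => [|x r IH] h; first by rewrite big_nil coprimen1.
rewrite big_cons; have IH' : coprime n (\prod_(j <- r | P j) F j).
  by apply: IH => i ir; apply: h; rewrite inE ir orbT.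
case Px: (P x) => //; rewrite coprimeMr IH' andbT; apply: h => //.
by rewrite inE eqxx.
Qed.

Lemma crt (r L : nat -> nat) (C : nat) :
  exists m : nat, forall p, prime p -> (p <= C)%N -> m = r p %[mod p ^ L p].
Proof.
elim: C => [|C [m IH]].
  by exists 0%N => p pp; rewrite leqn0 => /eqP e; move: pp; rewrite e.
set P := (\prod_(j <- iota 0 C.+1 | prime j) j ^ L j)%N.
case pC: (prime C.+1); last first.
  exists m => p pp; rewrite leq_eqVlt => /orP [/eqP e|lt]; first by move: pp; rewrite e pC.
  exact: IH.
have co : coprime (C.+1 ^ L C.+1) P.
  apply: coprimeXl; apply: coprime_prod => i; rewrite mem_iota add0n => /andP [_ iC] pi.
  apply: coprimeXr; rewrite prime_coprime //; apply/negP => d.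
  have := dvdn_leq (prime_gt0 pi) d; rewrite leqNgt iC //.
exists (chinese (C.+1 ^ L C.+1) P (r C.+1) m) => p pp.
rewrite leq_eqVlt => /orP [/eqP ->|lt]; first exact: chinese_modl.
have dP : (p ^ L p %| P)%N by apply: dvd_prod_mem => //; rewrite mem_iota add0n.
rewrite -(modn_dvdm _ dP) chinese_modr // modn_dvdm //; exact: IH.
Qed.

Lemma pdiv_frac p (L : nat) (z d : int) : prime p -> d != 0 ->
  logn p `|d|%N = 0%N -> z \in dvdz (Posz (p ^ L)) ->
  pdiv_by p L (z%:~R / d%:~R).
Proof.
move=> pp d0 ld hz; case: (z =P 0) => [->|/eqP z0]; first by rewrite mul0r pdiv0.
rewrite /pdiv_by vp_frac // ld subr0 lez_nat orbC -pfactor_dvdn ?absz_gt0 //.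
by move: hz; rewrite -topredE /= /dvdz /= => ->.
Qed.

Lemma pdiv_int p (L : nat) (z : int) : prime p -> z \in dvdz (Posz (p ^ L)) ->
  pdiv_by p L z%:~R.
Proof.
move=> pp hz; have := pdiv_frac pp (oner_neq0 _) (logn1 p) hz.
by rewrite divr1.
Qed.

Lemma vp_nat p (n : nat) : vp p n%:R = (logn p n)%:Z.
Proof. exact: (vp_int p n). Qed.

Lemma rat_nat_apx p (x : rat) (L : nat) : prime p -> pdiv_by p 0 x ->
  exists r : nat, pdiv_by p L (x - r%:R).
Proof.
move=> pp hx; case: (x =P 0) => [->|/eqP x0]; first by exists 0%N; rewrite subr0 pdiv0.
set n := numq x; set d := denq x.
have n0 : n != 0 by rewrite numq_eq0.
have d0 : d != 0 by rewrite denq_neq0.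
have ld : logn p `|d|%N = 0%N.
  move: hx; rewrite /pdiv_by (negbTE x0) /= /vp -/n -/d => h.
  case: (posnP (logn p `|d|)) => // lp.
  have pn : (p %| `|n|)%N by rewrite -(expn1 p) pfactor_dvdn ?absz_gt0 //; lia.
  have pd : (p %| `|d|)%N by rewrite -(expn1 p) pfactor_dvdn ?absz_gt0 //.
  have := coprime_num_den x; rewrite -/n -/d => co.
  have : (p %| gcdn `|n| `|d|)%N by rewrite dvdn_gcd pn pd.
  rewrite (eqP co) dvdn1 => /eqP p1.
  by move: pp; rewrite p1.
have co : coprime `|d| (p ^ L).
  apply: coprimeXr; rewrite coprime_sym prime_coprime //.
  by rewrite -(expn1 p) pfactor_dvdn ?absz_gt0 // ld.
have [u [v e]] := Bezoutz d (Posz (p ^ L)).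
have g1 : gcdz d (Posz (p ^ L)) = 1 by rewrite /gcdz (eqP co).
rewrite g1 in e.
set P : int := Posz (p ^ L).
have P0 : P != 0 by rewrite /P eqz_nat expn_eq0; move: (prime_gt0 pp); lia.
set k := ((n * u) %/ P)%Z; set r0 := ((n * u) %% P)%Z.
have r0ge : 0 <= r0 := modz_ge0 _ P0.
exists `|r0|%N.
have er : (`|r0|%N)%:R = r0%:~R :> rat by rewrite -{2}(gez0_abs r0ge).
have ex : x - (`|r0|%N)%:R = (n - r0 * d)%:~R / d%:~R.
  rewrite er -[x]divq_num_den -/n -/d intrD intrN intrM; field.
  by rewrite intr_eq0.
rewrite ex; apply: pdiv_frac => //.
have dv : n - r0 * d = (d * k + n * v) * P.
  have e1 : r0 = n * u - k * P by have := divz_eq (n * u) P; rewrite -/k -/r0 => ->; ring.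
  rewrite e1 {1}(_ : n = n * (u * d + v * P)); last by rewrite e mulr1.
  ring.
by rewrite dv; apply: dvdz_mull; apply: dvdzz.
Qed.

Lemma logn_fact_big p C : prime p -> (C < p)%N -> logn p C`! = 0%N.
Proof.
move=> pp; elim: C => [|C IH] lt; first by rewrite fact0 logn1.
rewrite factS lognM ?fact_gt0 // IH ?(ltnW lt) // addn0.
case: (posnP (logn p C.+1)) => // lp.
have : (p %| C.+1)%N by rewrite -(expn1 p) pfactor_dvdn.
by move/(dvdn_leq (ltn0Sn C)); rewrite leqNgt lt.
Qed.

Lemma bound_range (C : nat) (f : nat -> int) :
  exists E : nat, forall p, (p <= C)%N -> f p <= E%:Z.
Proof.
elim: C => [|C [E IH]].
  exists `|f 0%N|%N => p; rewrite leqn0 => /eqP ->.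
  by rewrite abszE ler_norm.
exists (maxn E `|f C.+1|%N) => p; rewrite leq_eqVlt => /orP [/eqP ->|lt].
  apply: (le_trans (ler_norm _)); rewrite -abszE lez_nat; exact: leq_maxr.
apply: (le_trans (IH p lt)); rewrite lez_nat; exact: leq_maxl.
Qed.

Lemma bound_seq (F : seq nat) (f : nat -> int) :
  exists K : nat, forall p, p \in F -> f p <= K%:Z.
Proof.
elim: F => [|x F [K IH]]; first by exists 0%N.
exists (maxn K `|f x|%N) => p; rewrite inE => /orP [/eqP ->|pF].
  apply: (le_trans (ler_norm _)); rewrite -abszE lez_nat; exact: leq_maxr.
apply: (le_trans (IH p pF)); rewrite lez_nat; exact: leq_maxl.
Qed.

Lemma bound_seq_nat (F : seq nat) : exists C : nat, forall p, p \in F -> (p <= C)%N.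
Proof.
have [K h] := bound_seq F (fun p => p%:Z); exists K => p /h; by rewrite lez_nat.
Qed.

Lemma choice_fun (A : Type) (P : nat -> A -> Prop) :
  (forall p, exists x, P p x) -> exists f : nat -> A, forall p, P p (f p).
Proof.
move=> h; exists (fun p => proj1_sig (constructive_indefinite_description _ (h p))).
by move=> p; case: (constructive_indefinite_description _ _).
Qed.

Lemma approx (C : nat) (c : nat -> rat) (T : nat -> nat) :
  exists q : rat, 0 < q /\
    (forall p, prime p -> (C < p)%N -> pdiv_by p 0 q) /\
    (forall p, prime p -> (p <= C)%N -> pdiv_by p (T p) (q - c p)).
Proof.
have [E hE] := bound_range C (fun p => - vp p (c p)).
set D : nat := (C`! ^ E)%N.
have D0 : (0 < D)%N by rewrite expn_gt0 fact_gt0.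
have D0' : D%:R != 0 :> rat by rewrite pnatr_eq0 -lt0n.
have vD p : vp p D%:R = (E * logn p C`!)%N by rewrite vp_nat lognX.
have lf p : prime p -> (p <= C)%N -> (0 < logn p C`!)%N.
  move=> pp pC; rewrite -pfactor_dvdn ?fact_gt0 // expn1 dvdn_fact //.
  by rewrite prime_gt0.
set L := fun p => (T p + E * logn p C`!)%N.
have hr : forall p, exists r : nat, prime p -> (p <= C)%N ->
    pdiv_by p (L p) (D%:R * c p - r%:R).
  move=> p; case: (boolP (prime p && (p <= C)%N)) => [/andP [pp pC]|np]; last first.
    by exists 0%N => pp pC; rewrite pp pC in np.
  have [|r hr] := @rat_nat_apx p (D%:R * c p) (L p) pp; last by exists r.
  have := pdiv_mul (pdiv_vp p D%:R) (pdiv_vp p (c p)); apply: pdiv_le.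
  rewrite vD; have := hE p pC; have := lf p pp pC => l1.
  have : (E <= E * logn p C`!)%N by rewrite leq_pmulr.
  lia.
have [r hr'] := choice_fun hr.
have [m hm] := crt r L C.
set P := (\prod_(j <- iota 0 C.+1 | prime j) j ^ L j)%N.
have P0 : (0 < P)%N by apply: prodn_cond_gt0 => i pi; rewrite expn_gt0 prime_gt0.
set m' := (m + P)%N.
exists (m'%:R / D%:R); split; [|split].
- by rewrite divr_gt0 // ltr0n //; lia.
- move=> p pp lt.
  have := pdiv_mul (pdiv_vp p m'%:R) (pdiv_vp p (D%:R)^-1); apply: pdiv_le.
  by rewrite vpV vD vp_nat logn_fact_big // muln0 oppr0 addr0.
- move=> p pp pC.
  have dP : (p ^ L p %| P)%N by apply: dvd_prod_mem => //; rewrite mem_iota add0n.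
  have hdiv : (Posz m' - Posz (r p)) \in dvdz (Posz (p ^ L p)).
    rewrite -eqz_mod_dvd !modz_nat eqz_nat; apply/eqP.
    by rewrite /m' -modnDmr (eqP dP) addn0 (hm p pp pC).
  have h1 := pdiv_int pp hdiv.
  have h2 : pdiv_by p (L p) (- (D%:R * c p - (r p)%:R)) by rewrite pdivN; exact: hr'.
  have := pdiv_mul (pdiv_add pp h1 h2) (pdiv_vp p (D%:R)^-1).
  have -> : ((Posz m' - Posz (r p))%:~R + - (D%:R * c p - (r p)%:R)) * (D%:R)^-1
      = m'%:R / D%:R - c p :> rat.
    rewrite intrD intrN; rewrite [(Posz m')%:~R]/intmul [(Posz (r p))%:~R]/intmul.
    by field.
  apply: pdiv_le; rewrite vpV vD /L; lia.
Qed.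

Lemma backward (a b : raw_adele) :
  is_finite_adele a -> is_finite_adele b ->
  (forall p : nat, prime p -> Qp_eq p (a p) Qp_zero -> Qp_eq p (b p) Qp_zero) ->
  adele_closure (pos_orbit a) b.
Proof.
move=> [Ca [Ba hBa]] [Cb [Bb hBb]] H0 F N.
have [C0 hC0] := bound_seq_nat F.
set C := maxn C0 (maxn Ba Bb).
have [K hK] := bound_seq F N.
have hl : forall p, exists ct : rat * nat, prime p -> forall q : rat,
    pdiv_by p ct.2%:Z (q - ct.1) -> Qp_in_ball p K%:Z (fun n => q * a p n - b p n).
  move=> p; case: (boolP (prime p)) => pp; last by exists (0, 0%N).
  have [c [T h]] := local_approx K%:Z pp (Ca p pp) (Cb p pp) (H0 p pp).
  by exists (c, T) => _.
have [f hf] := choice_fun hl.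
have [q [q0 [hbig hsmall]]] := approx C (fun p => (f p).1) (fun p => (f p).2).
exists (adele_scale q a); split.
  exists q; split => // p pp N'; exists 0%N => n _; by rewrite subrr pdiv0.
move=> p pp; rewrite /adele_scale.
case: (leqP p C) => [pC|Cp].
  have := hf p pp q (hsmall p pp pC); apply: ball_le.
  case: ifP => pF; first exact: hK.
  by [].
have pF : (p \in F) = false.
  apply/negP => /hC0; move: Cp; rewrite /C; lia.
rewrite pF.
have hA := hBa p pp (ltac:(move: Cp; rewrite /C; lia)).
have hB := hBb p pp (ltac:(move: Cp; rewrite /C; lia)).
have := ball_sub pp (ball_mulc (hbig p pp Cp) hA) hB.
by rewrite addr0.
Qed.

Unset Implicit Arguments.

Theorem lemma2p3 (a b : raw_adele) :
  is_finite_adele a -> is_finite_adele b ->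
  (adele_closure (pos_orbit a) b <->
   (forall p : nat, prime p -> Qp_eq p (a p) Qp_zero -> Qp_eq p (b p) Qp_zero)).
Proof.
move=> Ha Hb; split; first exact: forward.
exact: backward.
Qed.
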